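(* Let $I$ be an instance of SPA-S and let $\mathcal{M}$ be the set of all stable matchings of $I$. The student-oriented dominance relation $\preceq$ is a partial order (reflexive, anti-symmetric and transitive) on $\mathcal{M}$.
   Context: An instance $I$ of SPA-S consists of a finite set $\mathcal{S}$ of students, a finite set $\mathcal{P}$ of projects and a finite set $\mathcal{L}$ of lecturers. Each student $s_i$ ranks a subset $A_i\subseteq\mathcal{P}$ (its acceptable projects) in strict order. Each project is offered by exactly one lecturer; lecturer $l_k$ offers a nonempty set $P_k\subseteq\mathcal{P}$, the $P_k$ partitioning $\mathcal{P}$. Each lecturer $l_k$ ranks in strict order the students who find at least one project of $P_k$ acceptable. Projects have capacities $c_j\in\mathbb{Z}^+$, lecturers have capacities $d_k\in\mathbb{Z}^+$ with $\max\{c_j:p_j\in P_k\}\le d_k\le\sum\{c_j:p_j\in P_k\}$. A pair $(s_i,p_j)$, $p_j$ offered by $l_k$, is acceptable if $p_j\in A_i$ and $s_i$ is on $l_k$'s list. A matching $M$ is a set of acceptable pairs with each student in at most one pair, $|M(p_j)|\le c_j$, $|M(l_k)|\le d_k$, where $M(s_i)$, $M(p_j)$, $M(l_k)$ denote the project of $s_i$, the students assigned to $p_j$, and the students assigned to projects of $l_k$. Undersubscribed/full means fewer than/exactly capacity many assigned students. An acceptable pair $(s_i,p_j)\notin M$ ($p_j$ offered by $l_k$) blocks $M$ if ($s_i$ is unassigned or prefers $p_j$ to $M(s_i)$) and one of: (P1) $p_j$ and $l_k$ undersubscribed; (P2) $p_j$ undersubscribed, $l_k$ full, $s_i\in M(l_k)$;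 (P3) $p_j$ undersubscribed, $l_k$ full, $l_k$ prefers $s_i$ to the worst student of $M(l_k)$; (P4) $p_j$ full and $l_k$ prefers $s_i$ to the worst student of $M(p_j)$. $M$ is stable if it has no blocking pair. A student prefers $M$ to $M'$ if assigned in both and prefers $M(s_i)$ to $M'(s_i)$; is indifferent if unassigned in both or $M(s_i)=M'(s_i)$. $M\preceq M'$ iff every student prefers $M$ to $M'$ or is indifferent. It is known that exactly the same students are unassigned in all stable matchings of $I$. *)

(* Defs.v *)
From mathcomp Require Import all_boot.
Set Implicit Arguments. Unset Strict Implicit. Unset Printing Implicit Defensive.

Definition strict_order_on (T : finType) (r : rel T) (A : {set T}) : Prop :=
  [/\ (forall x y, r x y -> (x \in A) && (y \in A)),
      (forall x, ~~ r x x),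
      (forall x y z, r x y -> r y z -> r x z) &
      (forall x y, x \in A -> y \in A -> x != y -> r x y || r y x)].

Record SPAS (S P L : finType) := {
  acc : S -> {set P};
  prefS : S -> rel P;               (* prefS s p q : s prefers p to q *)
  lect : P -> L;
  prefL : L -> rel S;               (* prefL l s t : l prefers s to t *)
  pcap : P -> nat;
  lcap : L -> nat;
  prefS_ok : forall s, strict_order_on (prefS s) (acc s);
  prefL_ok : forall l, strict_order_on (prefL l)
                 [set s | [exists p, (lect p == l) && (p \in acc s)]];
  offers_nonempty : forall l, exists p, lect p = l;
  pcap_pos : forall p, 0 < pcap p;
  lcap_ge : forall l p, lect p = l -> pcap p <= lcap l;
  lcap_le : forall l, lcap l <= \sum_(p | lect p == l) pcap p
}.

Section Defs.
Variables (S P L : finType) (I : SPAS S P L).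

Definition lect_list (l : L) : {set S} :=
  [set s | [exists p, (lect I p == l) && (p \in acc I s)]].

Definition acceptable (s : S) (p : P) : bool :=
  (p \in acc I s) && (s \in lect_list (lect I p)).

Definition Mp (M : {set S * P}) (p : P) : {set S} := [set s | (s, p) \in M].
Definition Ml (M : {set S * P}) (l : L) : {set S} :=
  [set s | [exists p, ((s, p) \in M) && (lect I p == l)]].

Definition matching (M : {set S * P}) : Prop :=
  [/\ (forall s p, (s, p) \in M -> acceptable s p),
      (forall s p q, (s, p) \in M -> (s, q) \in M -> p = q),
      (forall p, #|Mp M p| <= pcap I p) &
      (forall l, #|Ml M l| <= lcap I l)].

Definition assigned (M : {set S * P}) (s : S) : Prop := exists p, (s, p) \in M.

Definition worst (l : L) (X : {set S}) (w : S) : Prop :=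
  w \in X /\ forall t, t \in X -> t != w -> prefL I l t w.

Definition blocking (M : {set S * P}) (s : S) (p : P) : Prop :=
  let l := lect I p in
  [/\ acceptable s p, (s, p) \notin M,
      (~ assigned M s \/ exists q, (s, q) \in M /\ prefS I s p q) &
      [\/ (#|Mp M p| < pcap I p /\ #|Ml M l| < lcap I l),
          [/\ #|Mp M p| < pcap I p, #|Ml M l| = lcap I l & s \in Ml M l],
          [/\ #|Mp M p| < pcap I p, #|Ml M l| = lcap I l &
              exists w, worst l (Ml M l) w /\ prefL I l s w]
        | #|Mp M p| = pcap I p /\
              exists w, worst l (Mp M p) w /\ prefL I l s w ]].

Definition stable (M : {set S * P}) : Prop :=
  matching M /\ forall s p, ~ blocking M s p.

Definition student_prefers (M M' : {set S * P}) (s : S) : Prop :=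
  exists p p', [/\ (s, p) \in M, (s, p') \in M' & prefS I s p p'].

Definition student_indifferent (M M' : {set S * P}) (s : S) : Prop :=
  (~ assigned M s /\ ~ assigned M' s) \/
  (exists p, (s, p) \in M /\ (s, p) \in M').

Definition dominates (M M' : {set S * P}) : Prop :=
  forall s, student_prefers M M' s \/ student_indifferent M M' s.

End Defs.

(* Main.v *)
Require Import Defs.
From mathcomp Require Import all_boot.

Set Implicit Arguments.
Section H.
Variables (S P L : finType) (I : SPAS S P L).

Lemma fun_of M : stable I M -> forall s p q, (s, p) \in M -> (s, q) \in M -> p = q.
Proof. by case=> [[_ H _ _] _]. Qed.

Lemma irr s p : ~ prefS I s p p.
Proof. by case: (prefS_ok I s) => _ H _ _; apply/negP. Qed.

Lemma trs s p q r : prefS I s p q -> prefS I s q r -> prefS I s p r.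
Proof. by case: (prefS_ok I s) => _ _ H _; apply: H. Qed.
End H.
Arguments trs {S P L I s p q r}.
Arguments irr {S P L I s p}.
Arguments fun_of {S P L I M} _ {s p q}.

Theorem proposition1 (S P L : finType) (I : SPAS S P L) :
  [/\ (forall M, stable I M -> dominates I M M),
      (forall M M', stable I M -> stable I M' ->
         dominates I M M' -> dominates I M' M -> M = M') &
      (forall M M' M'', stable I M -> stable I M' -> stable I M'' ->
         dominates I M M' -> dominates I M' M'' -> dominates I M M'')].
Proof.
split.
- move=> M _ s; right.
  case: (boolP [exists p, (s, p) \in M]) => [/existsP [p Hp]|/existsP H].
    by right; exists p.
  by left; split=> -[p Hp]; apply: H; exists p.
- move=> M M' sM sM' D1 D2.
  have ind : forall s p, (s, p) \in M -> (s, p) \in M'.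
    move=> s p Hp.
    case: (D1 s) => [[a [a' [Ha Ha' Hpr]]]|[[HM _]|[r [Hr Hr']]]].
    + case: (D2 s) => [[b [b' [Hb Hb' Hpr2]]]|[[_ HM]|[r [Hr Hr']]]].
      * have E1 := fun_of sM Hb' Ha. have E2 := fun_of sM' Hb Ha'.
        subst. by case: (irr (trs Hpr Hpr2)).
      * by case: HM; exists a.
      * have E1 := fun_of sM Hr' Ha. have E2 := fun_of sM' Hr Ha'.
        subst. by case: (irr Hpr).
    + by case: HM; exists p.
    + by rewrite (fun_of sM Hp Hr).
  have ind2 : forall s p, (s, p) \in M' -> (s, p) \in M.
    move=> s p Hp.
    case: (D2 s) => [[a [a' [Ha Ha' Hpr]]]|[[HM _]|[r [Hr Hr']]]].
    + case: (D1 s) => [[b [b' [Hb Hb' Hpr2]]]|[[_ HM]|[r [Hr Hr']]]].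
      * have E1 := fun_of sM' Hb' Ha. have E2 := fun_of sM Hb Ha'.
        subst. by case: (irr (trs Hpr Hpr2)).
      * by case: HM; exists a.
      * have E1 := fun_of sM' Hr' Ha. have E2 := fun_of sM Hr Ha'.
        subst. by case: (irr Hpr).
    + by case: HM; exists p.
    + by rewrite (fun_of sM' Hp Hr).
  apply/setP => -[s p]; apply/idP/idP; [exact: ind | exact: ind2].
- move=> M M' M'' sM sM' sM'' D1 D2 s.
  case: (D1 s) => [[a [a' [Ha Ha' Hpr]]]|[[HM HM']|[r [Hr Hr']]]];
  case: (D2 s) => [[b [b' [Hb Hb' Hpr2]]]|[[HN HN']|[t [Ht Ht']]]].
  + have E := fun_of sM' Ha' Hb. subst.
    by left; exists a, b'; split=> //; exact: trs Hpr Hpr2.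
  + by case: HN; exists a'.
  + have E := fun_of sM' Ha' Ht. subst. by left; do 2 eexists; split; eassumption.
  + by case: HM'; exists b.
  + by right; left.
  + by case: HM'; exists t.
  + have E := fun_of sM' Hr' Hb. subst. by left; do 2 eexists; split; eassumption.
  + by case: HN; exists r.
  + have E := fun_of sM' Hr' Ht. subst. by right; right; eexists; split; eassumption.
Qed.
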